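(* Assume $N\ge2$, $p>1$ and $M>-\mu^*(1)$. Then for real numbers $0<a<b$ there exists no positive solution $u$ of (E) on $(a,b)$ such that $u(r)\to\infty$ as $r\to a$.
   Context: (E) denotes the ODE $-u_{rr}-\frac{N-1}{r}u_r=|u|^{p-1}u+M|u_r|^{\frac{2p}{p+1}}$ for $r>0$. $\mu^*(1)=(p+1)\left(\frac{p+1}{2p}\right)^{\frac{p}{p+1}}$. *)

(* Defs.v *)
From Stdlib Require Import Reals.
From Coquelicot Require Import Coquelicot.
Open Scope R_scope.

(* x^y for x >= 0 and y > 0, with the convention 0^y = 0
   (Stdlib's Rpower 0 y = 1, so we patch the value at 0). *)
Definition rpow (x y : R) : R := if Req_EM_T x 0 then 0 else Rpower x y.

Definition mu_star1 (p : R) : R :=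
  (p + 1) * Rpower ((p + 1) / (2 * p)) (p / (p + 1)).

Definition solves_E (N : nat) (p M : R) (u : R -> R) (a b : R) : Prop :=
  forall r, a < r < b ->
    ex_derive u r /\ ex_derive (Derive u) r /\
    - Derive (Derive u) r - (INR N - 1) / r * Derive u r
      = rpow (Rabs (u r)) (p - 1) * u r
        + M * rpow (Rabs (Derive u r)) (2 * p / (p + 1)).

(* Main.v *)
Require Import Defs.
From Stdlib Require Import Reals Lra Psatz.
From Coquelicot Require Import Coquelicot.
Open Scope R_scope.

Lemma bern (b s : R) : 0 < b < 1 -> exp (b * s) <= b * exp s + (1 - b).
Proof.
  intros Hb.
  assert (E1 : b * exp s + (1 - b) =
    exp (b*s) * (b * exp ((1-b)*s) + (1-b) * exp (-(b*s)))).
  { rewrite Rmult_plus_distr_l.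
    replace (exp (b*s) * (b * exp ((1-b)*s))) with (b * (exp (b*s) * exp ((1-b)*s))) by ring.
    replace (exp (b*s) * ((1-b) * exp (-(b*s)))) with ((1-b) * (exp (b*s) * exp (-(b*s)))) by ring.
    rewrite <- !exp_plus.
    replace (b*s + (1-b)*s) with s by ring.
    replace (b*s + -(b*s)) with 0 by ring. rewrite exp_0. ring. }
  rewrite E1.
  pose proof (exp_ineq1_le ((1-b)*s)).
  pose proof (exp_ineq1_le (-(b*s))).
  pose proof (exp_pos (b*s)).
  assert (1 <= b * exp ((1-b)*s) + (1-b) * exp (-(b*s))) by nra.
  nra.
Qed.

Lemma at_right_big (u : R -> R) (a M0 : R) :
  filterlim u (at_right a) (Rbar_locally p_infty) ->
  exists d, 0 < d /\ forall r, a < r < a + d -> M0 < u r.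
Proof.
  intros H.
  assert (Hl : Rbar_locally p_infty (fun x => M0 < x)) by (exists M0; auto).
  specialize (H _ Hl).
  destruct H as [eps Heps].
  exists eps. split. apply cond_pos.
  intros r Hr. apply Heps; [|lra].
  unfold ball; simpl; unfold AbsRing_ball, abs, minus, plus, opp; simpl.
  apply Rabs_def1; lra.
Qed.

Lemma sign_lemma (f : R -> R) (s l : R) :
  is_derive f s l -> l <> 0 ->
  exists d, 0 < d /\ forall h, h <> 0 -> Rabs h < d ->
    0 < (f (s + h) - f s) / h * l.
Proof.
  intros H Hl. apply is_derive_Reals in H.
  assert (Hp : 0 < Rabs l) by (apply Rabs_pos_lt; auto).
  destruct (H _ Hp) as [d Hd].
  exists d. split. apply cond_pos.
  intros h Hh Hh2. specialize (Hd h Hh Hh2).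
  set (q := (f (s + h) - f s) / h) in *.
  destruct (Rcase_abs l) as [Hn|Hn];
  [rewrite (Rabs_left l Hn) in Hd | rewrite (Rabs_right l Hn) in Hd];
  apply Rabs_def2 in Hd; destruct Hd; nra.
Qed.

Lemma young (p u v : R) : 1 < p -> 0 < u -> 0 < v ->
  2 * mu_star1 p * Rpower v (2*p/(p+1)) <= 2 * (Rpower u (p-1) * u) + (p+1) * v^2 / u.
Proof.
  intros Hp Hu Hv.
  set (b := p/(p+1)).
  assert (Hb : 0 < b < 1).
  { unfold b; split. apply Rdiv_lt_0_compat; lra.
    apply (Rmult_lt_reg_r (p+1)); [lra|]. field_simplify; lra. }
  assert (Hb2 : 0 < 2*b) by lra.
  set (L := ln u). set (V := ln v).
  set (s := 2*V - (p+1)*L - ln (2*b)).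
  assert (Emu : mu_star1 p = (p+1) * exp (b * - ln (2*b))).
  { unfold mu_star1, Rpower. f_equal. f_equal. fold b. f_equal.
    rewrite <- ln_Rinv by lra. f_equal. unfold b. field. lra. }
  assert (Ev : Rpower v (2*p/(p+1)) = exp (2*b*V)).
  { unfold Rpower. f_equal. unfold b, V. field. lra. }
  assert (EL : 2 * p/(p+1) * V + b * - ln (2*b) = b*s + p*L).
  { unfold s, b. field. lra. }
  assert (Eu : Rpower u (p-1) * u = exp (p*L)).
  { unfold Rpower. assert (Hl : u = exp L) by (unfold L; rewrite exp_ln; lra).
    transitivity (exp ((p-1)*L) * exp L). rewrite <- Hl. reflexivity.
    rewrite <- exp_plus. f_equal. ring. }
  assert (Ev2 : v^2/u = exp s * (2*b) * exp (p*L)).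
  { assert (Hl : u = exp L) by (unfold L; rewrite exp_ln; lra).
    assert (Hl2 : v = exp V) by (unfold V; rewrite exp_ln; lra).
    rewrite <- (exp_ln (2*b)) by lra. rewrite <- !exp_plus.
    transitivity (exp V ^ 2 / exp L). rewrite <- Hl, <- Hl2; reflexivity.
    unfold Rdiv. rewrite <- exp_Ropp.
    replace (exp V ^ 2) with (exp (V + V)) by (rewrite exp_plus; ring).
    rewrite <- exp_plus. f_equal. unfold s, L, V. ring. }
  rewrite Emu, Eu.
  replace ((p+1) * v^2/u) with ((p+1) * (v^2/u)) by (field; lra).
  rewrite Ev2.
  assert (E3 : 2 * ((p+1) * exp (b * - ln (2*b))) * Rpower v (2*p/(p+1))
              = 2*(p+1) * exp (b*s) * exp (p*L)).
  { unfold Rpower. rewrite Rmult_assoc. rewrite Rmult_assoc. rewrite <- exp_plus.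
    replace (2 * p / (p + 1) * ln v) with (2*p/(p+1) * V) by reflexivity.
    rewrite (Rplus_comm (b * _)), EL, exp_plus. ring. }
  rewrite E3.
  pose proof (bern b s Hb).
  pose proof (exp_pos (p*L)).
  assert (Hpb : (p+1)*b = p) by (unfold b; field; lra).
  assert ((p+1) * exp (b*s) <= 1 + p * exp s).
  { apply Rle_trans with ((p+1)*(b * exp s + (1-b))).
    apply Rmult_le_compat_l; lra. right. unfold b. field. lra. }
  clearbody b s L V.
  assert (E4 : 2 * exp (p * L) + (p + 1) * (exp s * (2 * b) * exp (p * L)) = 2 * exp (p*L) * (1 + ((p+1)*b) * exp s)) by ring.
  rewrite E4, Hpb.
  replace (2 * (p + 1) * exp (b * s) * exp (p * L)) with (2 * exp (p*L) * ((p + 1) * exp (b * s))) by ring.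
  apply Rmult_le_compat_l; lra.
Qed.

Lemma rpow_pos x y : 0 < x -> rpow x y = Rpower x y.
Proof. intros H. unfold rpow. destruct (Req_EM_T x 0); [lra|auto]. Qed.
Lemma rpow_0 y : rpow 0 y = 0.
Proof. unfold rpow. destruct (Req_EM_T 0 0); [auto|lra]. Qed.

Lemma left_lt (f : R -> R) s l : is_derive f s l -> 0 < l ->
  exists d, 0 < d /\ forall x, s - d < x < s -> f x < f s.
Proof.
  intros H Hl. destruct (sign_lemma f s l H) as [d [Hd Hh]]; [lra|].
  exists d; split; auto. intros x Hx.
  specialize (Hh (x - s)). replace (s + (x - s)) with x in Hh by ring.
  assert (0 < (f x - f s) / (x - s) * l) by (apply Hh; [lra| rewrite Rabs_left; lra]).
  assert (0 < (f x - f s) / (x - s)) by nra.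
  assert (Hq : (f x - f s) = (f x - f s) / (x - s) * (x - s)) by (field; lra).
  nra.
Qed.

Lemma left_gt (f : R -> R) s l : is_derive f s l -> l < 0 ->
  exists d, 0 < d /\ forall x, s - d < x < s -> f s < f x.
Proof.
  intros H Hl. destruct (sign_lemma f s l H) as [d [Hd Hh]]; [lra|].
  exists d; split; auto. intros x Hx.
  specialize (Hh (x - s)). replace (s + (x - s)) with x in Hh by ring.
  assert (0 < (f x - f s) / (x - s) * l) by (apply Hh; [lra| rewrite Rabs_left; lra]).
  assert ((f x - f s) / (x - s) < 0) by nra.
  assert (Hq : (f x - f s) = (f x - f s) / (x - s) * (x - s)) by (field; lra).
  nra.
Qed.

Lemma right_lt (f : R -> R) s l : is_derive f s l -> l < 0 ->
  exists d, 0 < d /\ forall x, s < x < s + d -> f x < f s.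
Proof.
  intros H Hl. destruct (sign_lemma f s l H) as [d [Hd Hh]]; [lra|].
  exists d; split; auto. intros x Hx.
  specialize (Hh (x - s)). replace (s + (x - s)) with x in Hh by ring.
  assert (0 < (f x - f s) / (x - s) * l) by (apply Hh; [lra| rewrite Rabs_right; lra]).
  assert ((f x - f s) / (x - s) < 0) by nra.
  assert (Hq : (f x - f s) = (f x - f s) / (x - s) * (x - s)) by (field; lra).
  nra.
Qed.

Lemma step1 (N : nat) (p M : R) (u : R -> R) (a b : R) :
  0 < a -> a < b ->
  solves_E N p M u a b -> (forall r, a < r < b -> 0 < u r) ->
  filterlim u (at_right a) (Rbar_locally p_infty) ->
  forall r, a < r < b -> Derive u r < 0.
Proof.
  intros Ha Hab HE Hpos Hlim.
  assert (Hd : forall r, a < r < b -> is_derive u r (Derive u r)).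
  { intros r Hr. apply Derive_correct. apply (HE r Hr). }
  assert (Hdd : forall r, a < r < b -> is_derive (Derive u) r (Derive (Derive u) r)).
  { intros r Hr. apply Derive_correct. apply (HE r Hr). }
  assert (C1 : forall r, a < r < b -> Derive u r = 0 -> Derive (Derive u) r < 0).
  { intros r Hr H0. destruct (HE r Hr) as [_ [_ Heq]].
    rewrite H0, Rabs_R0, rpow_0 in Heq.
    pose proof (Hpos r Hr).
    rewrite Rabs_pos_eq, rpow_pos in Heq by lra.
    assert (0 < Rpower (u r) (p-1)) by (unfold Rpower; apply exp_pos).
    nra. }
  assert (CL : forall s, a < s < b -> 0 <= Derive u s ->
     exists d, 0 < d /\ forall x, s - d < x < s -> u x < u s).
  { intros s Hs H0. destruct H0 as [H0|H0].
    - apply (left_lt u s (Derive u s)); auto.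
    - symmetry in H0. destruct (left_gt (Derive u) s _ (Hdd s Hs) (C1 s Hs H0)) as [d1 [Hd1 H1]].
      exists (Rmin d1 (s - a)). split. apply Rmin_pos; lra.
      intros x Hx. pose proof (Rmin_l d1 (s-a)). pose proof (Rmin_r d1 (s-a)).
      destruct (MVT_cor2 u (Derive u) x s) as [c [Hc1 Hc2]]; [lra| |].
      + intros c Hc. apply is_derive_Reals. apply Hd. lra.
      + assert (0 < Derive u c). { rewrite <- H0. apply H1. lra. }
        nra. }
  intros r1 Hr1. destruct (Rlt_or_le (Derive u r1) 0) as [Hn|Hn]; auto.
  exfalso.
  destruct (at_right_big u a (u r1) Hlim) as [d [Hd0 Hbig]].
  set (r2 := a + Rmin d (r1 - a) / 2).
  assert (Hr2 : a < r2 < r1).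
  { unfold r2. pose proof (Rmin_l d (r1-a)). pose proof (Rmin_r d (r1-a)).
    assert (0 < Rmin d (r1 - a)) by (apply Rmin_pos; lra). lra. }
  assert (Hu2 : u r1 < u r2).
  { apply Hbig. unfold r2. pose proof (Rmin_l d (r1-a)). pose proof (Rmin_r d (r1-a)).
    assert (0 < Rmin d (r1 - a)) by (apply Rmin_pos; lra). lra. }
  destruct (continuity_ab_min u r2 r1) as [m [Hm1 Hm2]]; [lra| |].
  { intros c Hc. apply continuity_pt_filterlim.
    apply (ex_derive_continuous u c). exists (Derive u c). apply Hd. lra. }
  assert (Hmr2 : r2 < m).
  { destruct (proj1 Hm2) as [H|H]; auto. subst m. specialize (Hm1 r1). lra. }
  destruct (Rlt_or_le (Derive u m) 0) as [Hm|Hm].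
  - assert (Hmr1 : m < r1). { destruct (proj2 Hm2) as [H|H]; auto. subst m. lra. }
    destruct (right_lt u m _ (Hd m ltac:(lra)) Hm) as [d1 [Hd1 H1]].
    set (x := m + Rmin d1 (r1 - m) / 2).
    pose proof (Rmin_l d1 (r1-m)). pose proof (Rmin_r d1 (r1-m)).
    assert (0 < Rmin d1 (r1 - m)) by (apply Rmin_pos; lra).
    specialize (H1 x ltac:(unfold x; lra)). specialize (Hm1 x ltac:(unfold x; lra)). lra.
  - destruct (CL m ltac:(lra) Hm) as [d1 [Hd1 H1]].
    set (x := m - Rmin d1 (m - r2) / 2).
    pose proof (Rmin_l d1 (m - r2)). pose proof (Rmin_r d1 (m - r2)).
    assert (0 < Rmin d1 (m - r2)) by (apply Rmin_pos; lra).
    specialize (H1 x ltac:(unfold x; lra)). specialize (Hm1 x ltac:(unfold x; lra)). lra.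
Qed.

Theorem proposition4p8 (N : nat) (p M : R) :
  (2 <= N)%nat -> 1 < p -> - mu_star1 p < M ->
  forall a b : R, 0 < a -> a < b ->
  ~ (exists u : R -> R,
       solves_E N p M u a b /\
       (forall r, a < r < b -> 0 < u r) /\
       filterlim u (at_right a) (Rbar_locally p_infty)).
Proof.
  intros HN Hp HM a b Ha Hab [u [HE [Hpos Hlim]]].
  pose proof (step1 N p M u a b Ha Hab HE Hpos Hlim) as Hneg.
  set (mu := mu_star1 p) in *.
  assert (Hmu : 0 < mu).
  { unfold mu, mu_star1, Rpower. pose proof (exp_pos (p / (p + 1) * ln ((p + 1) / (2 * p)))). nra. }
  set (th := Rmax 0 (-M) / mu).
  assert (Hth0 : 0 <= th).
  { unfold th. apply Rmult_le_pos. apply Rmax_l. left; apply Rinv_0_lt_compat; auto. }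
  assert (Hth1 : th < 1).
  { unfold th. apply (Rmult_lt_reg_r mu); auto. unfold Rdiv. rewrite Rmult_assoc, Rinv_l by lra.
    rewrite Rmult_1_r, Rmult_1_l. apply Rmax_lub_lt; lra. }
  set (c := 1 - th).
  assert (Hc : 0 < c) by (unfold c; lra).
  assert (HN2 : 1 <= INR N - 1).
  { apply le_INR in HN. replace (INR 2) with 2 in HN by (simpl; ring). lra. }
  set (A := 2 * (INR N - 1) / a).
  assert (HA : 0 < A) by (unfold A; apply Rdiv_lt_0_compat; lra).
  set (K := A^2 / (4 * c^2 * (p+1)) + 1).
  assert (HK0 : 0 < K).
  { unfold K. assert (0 <= A^2/(4*c^2*(p+1))). apply Rdiv_le_0_compat. nra. nra. lra. }
  assert (HK : A^2 <= 4 * c^2 * (p+1) * K).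
  { unfold K. rewrite Rmult_plus_distr_l. 
    replace (4 * c ^ 2 * (p + 1) * (A ^ 2 / (4 * c ^ 2 * (p + 1)))) with (A^2) by (field; lra).
    nra. }
  set (U0 := exp (ln K / (p-1))).
  destruct (at_right_big u a U0 Hlim) as [d [Hd0 Hbig]].
  set (r1 := a + Rmin d (b - a) / 2).
  assert (Hreg : forall x, a < x <= r1 -> a < x < b /\ U0 < u x).
  { intros x Hx. unfold r1 in Hx. pose proof (Rmin_l d (b-a)). pose proof (Rmin_r d (b-a)).
    assert (0 < Rmin d (b - a)) by (apply Rmin_pos; lra).
    split; [lra|]. apply Hbig. lra. }
  assert (Hr1 : a < r1).
  { unfold r1. assert (0 < Rmin d (b - a)) by (apply Rmin_pos; lra). lra. }
  set (F := fun r => (Derive u r)^2 * exp(-(p+1) * ln (u r)) + c * ln (u r)).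
  set (F' := fun x => 2 * Derive u x * Derive (Derive u) x * exp(-(p+1)*ln(u x)) + (Derive u x)^2 * (exp(-(p+1)*ln(u x)) * (-(p+1) * (Derive u x / u x))) + c * (Derive u x / u x)).
  assert (HF : forall x, a < x <= r1 -> is_derive F x (F' x)).
  { intros x Hx. destruct (Hreg x Hx) as [Hxb _]. destruct (HE x Hxb) as [H1 [H2 _]].
    pose proof (Hpos x Hxb).
    unfold F, F'. auto_derive. repeat split; auto.
    change (Derive (fun x0 : R => Derive u x0) x) with (Derive (Derive u) x).
    change (Derive (fun x0 : R => u x0) x) with (Derive u x).
    unfold Rdiv. ring. }
  assert (HF' : forall x, a < x <= r1 -> 0 <= F' x).
  { intros x Hx. destruct (Hreg x Hx) as [Hxb HU]. destruct (HE x Hxb) as [_ [_ Heq]].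
    pose proof (Hpos x Hxb) as Hux. pose proof (Hneg x Hxb) as HDx.
    unfold F'.
    set (ux := u x) in *. set (Dx := Derive u x) in *. set (DDx := Derive (Derive u) x) in *.
    set (v := - Dx).
    assert (Hv : 0 < v) by (unfold v; lra).
    set (P := Rpower ux (p-1)).
    set (W := Rpower v (2*p/(p+1))).
    assert (HW : 0 <= W) by (left; unfold W, Rpower; apply exp_pos).
    rewrite (Rabs_pos_eq ux), rpow_pos in Heq by lra.
    rewrite (Rabs_left Dx), rpow_pos in Heq by lra.
    fold P in Heq. fold v in Heq. fold W in Heq.
    assert (HP0 : 0 < P) by (unfold P, Rpower; apply exp_pos).
    assert (HPu : P * ux^2 = exp((p+1)*ln ux)).
    { unfold P, Rpower. assert (Hl : ux = exp(ln ux)) by (rewrite exp_ln; lra).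
      transitivity (exp((p-1)*ln ux) * exp(ln ux)^2). rewrite <- Hl; reflexivity.
      simpl. rewrite Rmult_1_r. rewrite <- !exp_plus. f_equal; ring. }
    assert (HE' : exp(-(p+1)*ln ux) = / (P * ux^2)).
    { rewrite HPu, <- exp_Ropp. f_equal; ring. }
    assert (HDD : DDx = -((INR N - 1)/x)*Dx - P*ux - M*W) by lra.
    pose proof (young p ux v Hp Hux Hv) as Hy. fold mu P W in Hy.
    set (Y := v^2/ux) in *.
    assert (HY : Y * ux = v^2) by (unfold Y; field; lra).
    assert (HY0 : 0 <= Y) by (unfold Y; apply Rdiv_le_0_compat; nra).
    replace ((p+1)*v^2/ux) with ((p+1)*Y) in Hy by (unfold Y; field; lra).
    set (S := 2*(P*ux) + (p+1)*Y) in *.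
    assert (Hth : -th*S <= 2*M*W).
    { destruct (Rle_dec 0 M) as [HM0|HM0].
      - assert (th = 0) by (unfold th; rewrite Rmax_left by lra; unfold Rdiv; ring).
        rewrite H. nra.
      - assert (Htm : th * mu = -M) by (unfold th; rewrite Rmax_right by lra; field; lra).
        assert (0 <= th * (S - 2*mu*W)) by (apply Rmult_le_pos; lra).
        nra. }
    assert (HP : K <= P).
    { assert (HU0 : 0 < U0) by apply exp_pos.
      assert (H1 : ln U0 < ln ux) by (apply ln_increasing; auto).
      unfold U0 in H1. rewrite ln_exp in H1.
      assert (H2 : ln K < (p-1) * ln ux).
      { apply (Rmult_lt_compat_l (p-1)) in H1; [|lra].
        replace ((p-1) * (ln K / (p-1))) with (ln K) in H1 by (field; lra). auto. }
      left. rewrite <- (exp_ln K) by auto. unfold P, Rpower. apply exp_increasing. auto. }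
    set (B := (INR N - 1)/x).
    assert (HB0 : 0 <= B) by (unfold B; apply Rdiv_le_0_compat; lra).
    assert (HBA : 2 * B <= A).
    { unfold B, A. unfold Rdiv. rewrite <- Rmult_assoc. apply Rmult_le_compat_l. lra.
      apply Rinv_le_contravar; lra. }
    assert (Z : 0 <= c*K*ux^2 + c*(p+1)*v^2 - A*v*ux).
    { assert (Ei : 4*c*(p+1)*(c*K*ux^2 + c*(p+1)*v^2 - A*v*ux) = (2*c*(p+1)*v - A*ux)^2 + (4*c^2*(p+1)*K - A^2)*ux^2) by ring.
      assert (0 <= (2*c*(p+1)*v - A*ux)^2 + (4*c^2*(p+1)*K - A^2)*ux^2).
      { apply Rplus_le_le_0_compat. apply pow2_ge_0. apply Rmult_le_pos; nra. }
      assert (0 < 4*c*(p+1)) by nra. nra. }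
    assert (Z2 : 0 <= c*P*ux^2 + c*(p+1)*v^2 - A*v*ux).
    { assert (0 <= c*(P-K)*ux^2) by (apply Rmult_le_pos; [apply Rmult_le_pos|]; nra). nra. }
    assert (Z3 : 0 <= c*P*ux + c*(p+1)*Y - A*v).
    { assert (Ez : ux*(c*P*ux + c*(p+1)*Y - A*v) = c*P*ux^2 + c*(p+1)*v^2 - A*v*ux) by (rewrite <- HY; ring).
      destruct (Rle_or_lt 0 (c*P*ux + c*(p+1)*Y - A*v)) as [h|h]; auto. nra. }
    set (Q := 2*(P*ux) + 2*M*W - 2*B*v + (p+1)*Y - c*(P*ux)).
    assert (HQ : 0 <= Q).
    { unfold Q. assert (2*B*v <= A*v) by nra. unfold S in Hth. unfold c in *. nra. }
    assert (Eid : 2 * Dx * DDx * exp (- (p + 1) * ln ux) +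
      Dx ^ 2 * (exp (- (p + 1) * ln ux) * (- (p + 1) * (Dx / ux))) + c * (Dx / ux)
      = / (P * ux^2) * v * Q).
    { rewrite HE', HDD. unfold Q, Y, B. replace Dx with (-v) by (unfold v; ring). field. split; lra. }
    rewrite Eid. apply Rmult_le_pos; [|auto]. apply Rmult_le_pos; [|lra].
    left. apply Rinv_0_lt_compat. apply Rmult_lt_0_compat; [lra| apply pow_lt; lra]. }
  assert (Hmono : forall r, a < r < r1 -> F r <= F r1).
  { intros r Hr. destruct (MVT_cor2 F F' r r1) as [z [Hz1 Hz2]]; [lra| |].
    - intros z Hz. apply is_derive_Reals. apply HF. lra.
    - assert (0 <= F' z) by (apply HF'; lra). nra. }
  assert (Hlow : forall r, a < r < r1 -> c * ln (u r) <= F r).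
  { intros r Hr. unfold F. assert (0 <= Derive u r ^ 2 * exp (- (p + 1) * ln (u r))).
    apply Rmult_le_pos. apply pow2_ge_0. left; apply exp_pos. lra. }
  destruct (at_right_big u a (exp (F r1 / c)) Hlim) as [d2 [Hd2 Hbig2]].
  set (r := a + Rmin d2 (r1 - a) / 2).
  assert (Hr : a < r < r1).
  { unfold r. pose proof (Rmin_l d2 (r1-a)). pose proof (Rmin_r d2 (r1-a)).
    assert (0 < Rmin d2 (r1 - a)) by (apply Rmin_pos; lra). lra. }
  assert (Hur : exp (F r1 / c) < u r).
  { apply Hbig2. unfold r. pose proof (Rmin_l d2 (r1-a)). pose proof (Rmin_r d2 (r1-a)).
    assert (0 < Rmin d2 (r1 - a)) by (apply Rmin_pos; lra). lra. }
  assert (Hl : F r1 / c < ln (u r)).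
  { rewrite <- (ln_exp (F r1 / c)). apply ln_increasing; auto. apply exp_pos. }
  assert (F r1 < c * ln (u r)).
  { apply (Rmult_lt_compat_l c) in Hl; auto.
    replace (c * (F r1 / c)) with (F r1) in Hl by (field; lra). auto. }
  specialize (Hmono r Hr). specialize (Hlow r Hr). lra.
Qed.
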